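(* The set of operators $T\in\mathscr{L}(\mathscr{M}(\Omega))$ that are $\sigma(\mathscr{M}(\Omega),C_b(\Omega))$-continuous (equivalently, weakly continuous operators whose norm adjoint $T^*$ maps $C_b(\Omega)$ into $C_b(\Omega)$) is in general not a sublattice of $\mathscr{L}(\mathscr{M}(\Omega),\sigma)$: there exist a Polish space $\Omega$ (e.g. $\Omega=\{0\}\cup\{\pm 1/n:n\in\mathbb{N}\}\subset\mathbb{R}$) and a weakly continuous operator $T$ with $T^*C_b(\Omega)\subset C_b(\Omega)$ such that the weakly continuous operator associated with $\lvert k\rvert$ ($k$ the kernel of $T$) does not leave $C_b(\Omega)$ invariant under its adjoint, and moreover $T$ has no modulus in the ordered space of $\sigma(\mathscr{M}(\Omega),C_b(\Omega))$-continuous operators.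
   Context: $\Omega$ Polish, $\mathscr{M}(\Omega)$ the finite signed Borel measures, $C_b(\Omega)$ the bounded continuous functions, $B_b(\Omega)$ the bounded Borel functions, with duality $\langle f,\mu\rangle=\int f\,d\mu$. A transition kernel is a map $k:\Omega\times\mathscr{B}(\Omega)\to\mathbb{R}$, signed measure in the second variable and Borel measurable in the first; bounded if $\sup_x\lvert k\rvert(x,\Omega)<\infty$. A weakly continuous operator is one of the form $(T\mu)(A)=\int k(x,A)\,d\mu(x)$ with $k$ a bounded transition kernel (its associated kernel); $\mathscr{L}(\mathscr{M}(\Omega),\sigma)$ is the space of these. Operators are ordered by positivity: $S\le T$ iff $S\mu\le T\mu$ for all positive $\mu$. *)

(* Defs.v *)
From HB Require Import structures.
From mathcomp Require Import all_boot all_order all_algebra.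
From mathcomp Require Import all_classical all_reals all_analysis.
Set Implicit Arguments. Unset Strict Implicit. Unset Printing Implicit Defensive.
Import Order.TTheory GRing.Theory Num.Theory.
Import numFieldNormedType.Exports.
Local Open Scope classical_set_scope.
Local Open Scope ring_scope.

Definition Om0 (R : realType) : set R :=
  [set x | x = 0 \/ exists n : nat, x = (n.+1%:R)^-1 \/ x = - (n.+1%:R)^-1].
Arguments Om0 : clear implicits.
Lemma Om0_0 (R : realType) : Om0 R 0. Proof. by left. Qed.
Definition Om (R : realType) : topologicalType := set_type (Om0 R).
Definition om0 (R : realType) : Om R := SigSub (mem_set (Om0_0 R)).
HB.instance Definition _ (R : realType) := isPointed.Build (Om R) (om0 R).
Definition OmB (R : realType) := g_sigma_algebraType (@open (Om R)).

Section Generic.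
Context d (T : measurableType d) (R : realType).
Local Open Scope ereal_scope.

(* finite signed measure: real-valued, nu(empty)=0, countably additive on
   disjoint sequences of measurable sets (values outside the sigma-algebra
   are irrelevant) *)
Definition is_fsmeasure (nu : set T -> R) : Prop :=
  nu set0 = 0%R /\
  forall F : (set T)^nat, (forall n, measurable (F n)) -> trivIset setT F ->
    ((fun n => \sum_(i < n) nu (F i)) @ \oo --> nu (\bigcup_n F n))%R.

Definition jpos (nu : set T -> R) : set T -> \bar R := fun A =>
  ereal_sup [set (nu B)%:E | B in [set B | measurable B /\ B `<=` A]].
Definition jneg (nu : set T -> R) : set T -> \bar R := fun A =>
  ereal_sup [set (- nu B)%:E | B in [set B | measurable B /\ B `<=` A]].
Definition tvar (nu : set T -> R) : set T -> \bar R := fun A =>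
  jpos nu A + jneg nu A.

Definition sint (nu : set T -> R) (f : T -> R) : R :=
  (fine (integral (jpos nu) setT (EFin \o f)) -
   fine (integral (jneg nu) setT (EFin \o f)))%R.

Definition is_kernel (k : T -> set T -> R) : Prop :=
  (forall x, is_fsmeasure (k x)) /\
  (forall A, measurable A -> measurable_fun setT (fun x => k x A)).
Definition is_bounded_kernel (k : T -> set T -> R) : Prop :=
  is_kernel k /\ exists M : R, forall x, tvar (k x) setT <= M%:E.

Definition abs_kernel (k : T -> set T -> R) : T -> set T -> R :=
  fun x A => fine (tvar (k x) A).

Definition opp_kernel (k : T -> set T -> R) : T -> set T -> R :=
  fun x A => (- k x A)%R.

Definition op_apply (k : T -> set T -> R) (mu : {measure set T -> \bar R})
  (A : set T) : R := fine (\int[mu]_x (k x A)%:E).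

Definition op_le (ks kt : T -> set T -> R) : Prop :=
  forall mu : {measure set T -> \bar R}, mu setT < +oo ->
    forall A, measurable A -> (op_apply ks mu A <= op_apply kt mu A)%R.

End Generic.

Section Concrete.
Variable R : realType.

Definition Cb (f : Om R -> R) : Prop :=
  continuous f /\ exists M : R, forall x, `|f x| <= M.

Definition adjoint (k : OmB R -> set (OmB R) -> R) (f : Om R -> R) : Om R -> R :=
  fun x => sint (k x) f.

Definition adj_preserves_Cb (k : OmB R -> set (OmB R) -> R) : Prop :=
  forall f, Cb f -> Cb (adjoint k f).

(* sigma(M(Omega), C_b(Omega))-continuous operators, i.e. weakly continuous
   operators (given by a bounded kernel) whose adjoint leaves C_b invariant *)
Definition sigma_cont (k : OmB R -> set (OmB R) -> R) : Prop :=
  is_bounded_kernel k /\ adj_preserves_Cb k.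

Definition is_modulus_in_sigma_cont (s t : OmB R -> set (OmB R) -> R) : Prop :=
  sigma_cont s /\ op_le t s /\ op_le (opp_kernel t) s /\
  forall r, sigma_cont r -> op_le t r -> op_le (opp_kernel t) r -> op_le s r.

End Concrete.

(* Main.v *)
Require Import Defs.
From HB Require Import structures.
From mathcomp Require Import all_boot all_order all_algebra.
From mathcomp Require Import all_classical all_reals all_analysis measurable_realfun.
From mathcomp Require Import lra.
Set Implicit Arguments. Unset Strict Implicit. Unset Printing Implicit Defensive.
Import Order.TTheory GRing.Theory Num.Theory.
Import numFieldNormedType.Exports.
Local Open Scope classical_set_scope.
Local Open Scope ring_scope.


Section S.
Variable R : realType.
Local Notation T := (OmB R).
Local Notation O := (Om R).

Definition sv (x : O) : R := @set_val R (Om0 R) x.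

Lemma sv_inj : injective sv.
Proof. by move=> x y; apply: val_inj. Qed.

Lemma open_meas (U : set T) : @open O U -> measurable U.
Proof. by move=> oU; apply: sub_sigma_algebra. Qed.

Lemma open_pre (W : set R) : open W -> @open O (sv @^-1` W).
Proof. by move=> oW; exists W. Qed.

Lemma sv_cont : continuous sv.
Proof. exact: (@initial_continuous _ R (@set_val R (Om0 R))). Qed.

Lemma mset1 (a : T) : measurable [set a].
Proof.
rewrite -[X in measurable X]setCK; apply: measurableC; apply: open_meas.
have -> : ~` [set a] = sv @^-1` (~` [set sv a]).
  apply/seteqP; split => x /=.
  - by move=> xa ex; apply: xa; apply: sv_inj.
  - by move=> h xa; apply: h; rewrite xa.
apply: open_pre; apply: closed_openC.
exact: (accessible_closed_set1 (hausdorff_accessible (@Rhausdorff R))).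
Qed.

Lemma cont_meas (f : O -> R) : continuous f -> measurable_fun (setT : set T) f.
Proof.
move=> /continuousP cf; apply: (measurability _ (measurable_realfun.RGenOpens.measurableE R)).
move=> _ [_ [a [b ->] <-]]; rewrite setTI; apply: open_meas.
exact/cf/interval_open.
Qed.

Lemma cont_measO (f : O -> O) : continuous f -> measurable_fun (setT : set T) (f : T -> T).
Proof.
move=> /continuousP cf; apply: (@measurability _ _ T T setT (f : T -> T) (@open O) erefl).
move=> _ [U oU <-]; rewrite setTI; apply: open_meas; exact: cf.
Qed.

Lemma Om0N x : Om0 R x -> Om0 R (- x).
Proof.
case=> [->|[n [->|->]]]; first by left; rewrite oppr0.
- by right; exists n; right.
- by right; exists n; left; rewrite opprK.
Qed.

Lemma Om0_abs x : Om0 R x -> Om0 R `|x|.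
Proof. by move=> h; case: (ger0P x) => _; [|apply: Om0N]. Qed.

Definition mkO (x : R) (h : Om0 R x) : O := @exist R (fun x => x \in Om0 R) x (mem_set h).

Lemma svK x h : sv (@mkO x h) = x. Proof. by []. Qed.

Definition onegO (x : O) : O := mkO (Om0N (set_valP x)).
Definition pabsO (x : O) : O := mkO (Om0_abs (set_valP x)).
Definition nabsO (x : O) : O := mkO (Om0N (Om0_abs (set_valP x))).

Lemma cont_O (f : O -> O) (g : R -> R) : continuous g -> (forall x, sv (f x) = g (sv x)) ->
  continuous f.
Proof.
move=> cg fg; apply: (@continuous_comp_initial _ O R (@set_val R (Om0 R))).
have -> : (@set_val R (Om0 R) \o f) = g \o sv by apply: funext => x /=; exact: fg.
move=> x; apply: continuous_comp; [exact: sv_cont | exact: cg].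
Qed.

Lemma onegO_cont : continuous onegO.
Proof. apply: (@cont_O _ (fun x => - x)) => //; exact: opp_continuous. Qed.
Lemma pabsO_cont : continuous pabsO.
Proof. apply: (@cont_O _ (fun x => `|x|)) => //; exact: norm_continuous. Qed.
Lemma nabsO_cont : continuous nabsO.
Proof.
apply: (@cont_O _ (fun x => - `|x|)) => // x.
apply: continuous_comp; [exact: norm_continuous| exact: opp_continuous].
Qed.
Lemma id_cont : continuous (@id O).
Proof. by move=> x. Qed.

End S.


Section S2.
Variable R : realType.
Local Notation T := (OmB R).
Implicit Types (nu : set T -> R) (a b p : T) (A B : set T).

Lemma sup_eq (S : set (\bar R)) m : S m -> (forall y, S y -> (y <= m)%E) -> ereal_sup S = m.
Proof.
move=> Sm ub; apply/eqP; rewrite eq_le; apply/andP; split.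
  by apply/ereal_supP => y /ub.
exact: ereal_sup_ubound.
Qed.

Lemma ind_in A p : A p -> \1_A p = 1 :> R.
Proof. by move=> Ap; rewrite indicE mem_set. Qed.
Lemma ind_out A p : ~ A p -> \1_A p = 0 :> R.
Proof. by move=> Ap; rewrite indicE memNset. Qed.
Lemma ind_ge0 A p : 0 <= \1_A p :> R.
Proof. by rewrite indicE ler0n. Qed.
Lemma ind_le A B p : B `<=` A -> \1_B p <= \1_A p :> R.
Proof.
move=> BA; have [Bp|Bp] := pselect (B p); last by rewrite ind_out // ind_ge0.
by rewrite !ind_in //; apply: BA.
Qed.

Lemma JPle0 nu : (forall B, measurable B -> nu B <= 0) -> nu set0 = 0 ->
  jpos nu = fun _ => 0%E.
Proof.
move=> h h0; apply/funext => A; apply: sup_eq.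
  by exists set0; [split=> //; exact: sub0set | rewrite h0].
by move=> _ [B [mB _] <-]; rewrite lee_fin; exact: h.
Qed.

Lemma JP0 nu : (forall B, measurable B -> nu B = 0) ->
  jpos nu = (fun _ => 0%E) /\ jneg nu = (fun _ => 0%E).
Proof.
move=> h; split.
  by apply: JPle0 => [B mB|]; rewrite ?h.
by apply: (@JPle0 (fun B => - nu B)) => [B mB|]; rewrite h ?oppr0.
Qed.

Lemma JP1 nu a b : (forall B, measurable B -> nu B = \1_B a + \1_B b) ->
  jpos nu = fun A => (\1_A a + \1_A b)%:E.
Proof.
move=> h; apply/funext => A; apply: sup_eq; last first.
  by move=> _ [B [mB BA] <-]; rewrite lee_fin h //; apply: lerD; apply: ind_le.
have [Aa|Aa] := pselect (A a); have [Ab|Ab] := pselect (A b).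
- exists ([set a] `|` [set b]).
    split; first by apply: measurableU; apply: mset1.
    by move=> x [->|->].
  by rewrite h ?ind_in //; [by right| by left | by apply: measurableU; apply: mset1].
- exists [set a]; first by split; [exact: mset1| move=> x ->].
  rewrite h; last exact: mset1.
  rewrite (ind_in (A:=[set a])) // (ind_in Aa) (ind_out (A:=[set a]) (p:=b)) ?(ind_out Ab) //.
  by move=> ba; apply: Ab; rewrite ba.
- exists [set b]; first by split; [exact: mset1| move=> x ->].
  rewrite h; last exact: mset1.
  rewrite (ind_in (A:=[set b]) (p:=b)) // (ind_in Ab) (ind_out (A:=[set b]) (p:=a)) ?(ind_out Aa) //.
  by move=> ab; apply: Aa; rewrite ab.
- exists set0; first by split => //; exact: sub0set.
  by rewrite h // !ind_out.
Qed.

Lemma JP1n nu a b : (forall B, measurable B -> nu B = \1_B a + \1_B b) ->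
  jneg nu = fun _ => 0%E.
Proof.
move=> h; apply: (@JPle0 (fun B => - nu B)) => [B mB|].
  by rewrite h // oppr_le0 addr_ge0 // ind_ge0.
by rewrite h // !ind_out // addr0 oppr0.
Qed.

Lemma JPm nu a b : a <> b -> (forall B, measurable B -> nu B = \1_B a - \1_B b) ->
  jpos nu = fun A => (\1_A a)%:E.
Proof.
move=> ab h; apply/funext => A; apply: sup_eq; last first.
  move=> _ [B [mB BA] <-]; rewrite lee_fin h //.
  by rewrite lerBlDr (le_trans (ind_le a BA)) // lerDl ind_ge0.
have [Aa|Aa] := pselect (A a).
- exists [set a]; first by split; [exact: mset1| move=> x ->].
  rewrite h; last exact: mset1.
  rewrite (ind_in (A:=[set a])) // (ind_in Aa) (ind_out (A:=[set a]) (p:=b)) ?subr0 //.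
  by move=> ba; apply: ab; rewrite ba.
- exists set0; first by split => //; exact: sub0set.
  by rewrite h // !ind_out // subr0.
Qed.

Lemma JPmn nu a b : a <> b -> (forall B, measurable B -> nu B = \1_B a - \1_B b) ->
  jneg nu = fun A => (\1_A b)%:E.
Proof.
move=> ab h; apply: (@JPm (fun B => - nu B) b a).
  by move=> ba; apply: ab.
by move=> B mB; rewrite h // opprB.
Qed.

Lemma dirac_cvg (F : (set T)^nat) p : (forall n, measurable (F n)) -> trivIset setT F ->
  (fun n => \sum_(i < n) (\1_(F i) p : R)) @ \oo --> (\1_(\bigcup_n F n) p : R).
Proof.
move=> mF tF.
have hs := @measure_semi_sigma_additive _ _ _ (@dirac _ T p R).
have h := hs F mF tF (bigcupT_measurable F mF).
rewrite [X in _ --> X]diracE in h.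
have h2 := @fine_cvg R nat \oo _ _ _ h.
rewrite -indicE in h2.
move: h2; rewrite (@eq_cvg _ _ _ (fine \o (fun n => \sum_(0 <= i < n) (@dirac _ T p R) (F i)))
  (fun n => \sum_(i < n) (\1_(F i) p : R))).
  by move=> H; apply: H; apply: _.
move=> n /=.
rewrite (eq_bigr (fun i => (\1_(F i) p)%:E)); last by move=> i _; rewrite diracE indicE.
by rewrite sumEFin /= big_mkord.
Qed.

End S2.


Section S3.
Variable R : realType.
Local Notation T := (OmB R).
Implicit Types (nu : set T -> R) (a b p : T) (A B : set T).

Lemma fs_kern a b (e : R) : is_fsmeasure (fun A => \1_A a + e * \1_A b).
Proof.
split; first by rewrite !ind_out // mulr0 addr0.
move=> F mF tF.
rewrite (@eq_cvg _ _ _ _ (fun n => \sum_(i < n) \1_(F i) a + e * \sum_(i < n) \1_(F i) b)); last first.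
  by move=> n /=; rewrite big_split /= mulr_sumr.
apply: cvgD; first exact: dirac_cvg.
apply: cvgM; [exact: cvg_cst | exact: dirac_cvg].
Qed.

Lemma fs_add nu A B : is_fsmeasure nu -> measurable A -> measurable B ->
  A `&` B = set0 -> nu (A `|` B) = nu A + nu B.
Proof.
move=> [n0 hs] mA mB AB.
have mF : forall i, measurable (bigcup2 A B i) by case=> [|[|i]] /=.
have := hs _ mF; rewrite -trivIset_bigcup2 bigcup2E => /(_ AB) h1.
have h2 : (fun n => \sum_(i < n) nu (bigcup2 A B i)) @ \oo --> nu A + nu B.
  apply: cvg_near_cst; exists 2%N => //= -[|[|m]] // _.
  by rewrite !big_ord_recl /= big1 ?addr0 // => i _; rewrite n0.
by rewrite -(cvg_lim (@Rhausdorff R) h1) (cvg_lim (@Rhausdorff R) h2).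
Qed.

Lemma fs_dec nu A p : is_fsmeasure nu -> measurable A ->
  nu A = nu (A `\ p) + \1_A p * nu [set p].
Proof.
move=> hn mA; have [Ap|Ap] := pselect (A p); last first.
  by rewrite not_setD1 // ind_out // mul0r addr0.
rewrite ind_in // mul1r -[in LHS](setD1K Ap) setUC fs_add //.
- by apply: measurableD => //; exact: mset1.
- exact: mset1.
- by rewrite setIC; apply/seteqP; split => x //= -[-> [_ h]]; apply: h.
Qed.

End S3.


Section S4.
Variable R : realType.
Local Notation T := (OmB R).
Implicit Types (nu : set T -> R) (a b p : T) (A B : set T).

Lemma int_dirac_f (f : T -> R) a : measurable_fun setT f ->
  (\int[\d_a]_(x in setT) (f x)%:E = (f a)%:E)%E.
Proof.
move=> mf; rewrite integral_dirac //; last exact/measurable_EFinP.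
by rewrite diracE in_setT mul1e.
Qed.

Lemma intg_dirac (f : T -> R) a : measurable_fun setT f ->
  (\d_a).-integrable setT (EFin \o f).
Proof.
move=> mf; apply/integrableP; split; first exact/measurable_EFinP.
under eq_integral do rewrite /= ?abse_EFin.

rewrite int_dirac_f ?ltry //.
by apply: measurableT_comp => //; exact: normr_measurable.
Qed.

Lemma zero_mzero : (fun _ : set T => 0%E) = @mzero _ T R.
Proof. by []. Qed.

Lemma S1 nu a b (f : T -> R) : (forall B, measurable B -> nu B = \1_B a + \1_B b) ->
  measurable_fun setT f -> sint nu f = f a + f b.
Proof.
move=> h mf; rewrite /sint (JP1 h) (JP1n h) zero_mzero integral_measure_zero.
rewrite (_ : (fun A => _) = measure_add \d_a \d_b); last first.
  by apply/funext => A; rewrite measure_addE.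
rewrite integral_measure_add //; try exact: intg_dirac.
by rewrite !int_dirac_f //= subr0.
Qed.

Lemma Sm nu a b (f : T -> R) : a <> b -> (forall B, measurable B -> nu B = \1_B a - \1_B b) ->
  measurable_fun setT f -> sint nu f = f a - f b.
Proof.
move=> ab h mf; rewrite /sint (JPm ab h) (JPmn ab h).
rewrite (_ : (fun A => _) = \d_a); last by apply/funext => A; rewrite diracE indicE.
rewrite (_ : (fun A => _) = \d_b); last by apply/funext => A; rewrite diracE indicE.
by rewrite !int_dirac_f.
Qed.

Lemma S0 nu (f : T -> R) : (forall B, measurable B -> nu B = 0) -> sint nu f = 0.
Proof.
move=> h; rewrite /sint; have [-> ->] := JP0 h.
by rewrite zero_mzero integral_measure_zero /= subr0.
Qed.

Definition kern (phi psi : Om R -> Om R) (e : R) : T -> set T -> R :=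
  fun x A => \1_A (phi x : T) + e * \1_A (psi x : T).

Lemma sint_kern phi psi (e : R) x (f : T -> R) : (e = 1 \/ e = -1) -> measurable_fun setT f ->
  sint (kern phi psi e x) f = f (phi x) + e * f (psi x).
Proof.
move=> [->|->] mf.
  rewrite mul1r; apply: S1 => // B mB; by rewrite /kern mul1r.
have [E|ne] := pselect (phi x = psi x).
  rewrite S0; first by rewrite E mulN1r subrr.
  by move=> B mB; rewrite /kern E mulN1r subrr.
rewrite mulN1r; apply: Sm => // B mB; by rewrite /kern mulN1r.
Qed.

Lemma tvar_kern phi psi (e : R) x : (e = 1 \/ e = -1) ->
  (tvar (kern phi psi e x) setT <= 2%:E)%E.
Proof.
rewrite /tvar; move=> [->|->].
  have h : forall B, measurable B -> kern phi psi 1 x B = \1_B (phi x : T) + \1_B (psi x : T).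
    by move=> B mB; rewrite /kern mul1r.
  rewrite (JP1 h) (JP1n h) adde0 lee_fin !ind_in //.
have [E|ne] := pselect (phi x = psi x).
  have h0 : forall B, measurable B -> kern phi psi (-1) x B = 0.
    by move=> B mB; rewrite /kern E mulN1r subrr.
  have [-> ->] := JP0 h0.
  by rewrite adde0 lee_fin.
have h : forall B, measurable B -> kern phi psi (-1) x B = \1_B (phi x : T) - \1_B (psi x : T).
  by move=> B mB; rewrite /kern mulN1r.
by rewrite (JPm ne h) (JPmn ne h) -EFinD lee_fin !ind_in.
Qed.

End S4.


Section S5.
Variable R : realType.
Local Notation T := (OmB R).
Local Notation O := (Om R).

Lemma kern_meas phi psi (e : R) A : continuous phi -> continuous psi -> measurable A ->
  measurable_fun setT (fun x => kern phi psi e x A).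
Proof.
move=> cphi cpsi mA.
have mi : forall (g : O -> O), continuous g ->
    measurable_fun setT (fun x : T => \1_A (g x : T) : R).
  move=> g cg.
  have mp : measurable (g @^-1` A : set T).
    by rewrite -[X in measurable X]setTI; move: (cont_measO cg) => /(_ measurableT _ mA).
  rewrite (_ : (fun x => _) = \1_(g @^-1` A)); first exact: measurable_indic.
  by apply/funext => x; rewrite !indicE.
have m1 := mi _ cphi; have m2 := mi _ cpsi.
rewrite /kern; apply: measurable_funD => //; apply: measurable_funM => //.
Qed.

Lemma sc_kern phi psi (e : R) : continuous phi -> continuous psi -> (e = 1 \/ e = -1) ->
  sigma_cont (kern phi psi e).
Proof.
move=> cphi cpsi he; split.
  split; first by split => [x|A mA]; [exact: fs_kern | exact: kern_meas].
  by exists 2 => x; exact: tvar_kern.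
move=> f [cf [M hM]].
have -> : adjoint (kern phi psi e) f = fun x => f (phi x) + e * f (psi x).
  by apply/funext => x; rewrite /adjoint sint_kern //; exact: cont_meas.
split.
  have h1 : continuous (f \o phi) := fun x => continuous_comp (cphi x) (cf _).
  have h2 : continuous (f \o psi) := fun x => continuous_comp (cpsi x) (cf _).
  move=> x; apply: cvgD; [exact: nbhs_filter| exact: h1 |].
  apply: cvgM; [exact: nbhs_filter | exact: (@cst_continuous O R e x) | exact: h2].
exists (M + M) => x; rewrite (le_trans (ler_normD _ _)) // lerD // normrM.
by case: he => ->; rewrite ?normrN normr1 mul1r.
Qed.

Lemma op_dirac (t : T -> set T -> R) x A : measurable_fun setT (fun y => t y A) ->
  op_apply t (\d_x) A = t x A.
Proof. by move=> m; rewrite /op_apply int_dirac_f. Qed.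

Lemma le_dirac (t1 t2 : T -> set T -> R) x A : op_le t1 t2 -> measurable A ->
  measurable_fun setT (fun y => t1 y A) -> measurable_fun setT (fun y => t2 y A) ->
  t1 x A <= t2 x A.
Proof.
move=> h mA m1 m2; rewrite -(op_dirac x m1) -(op_dirac x m2); apply: h => //.
exact: ltry.
Qed.

Lemma ople_pt (t1 t2 : T -> set T -> R) :
  (forall A, measurable A -> measurable_fun setT (fun y => t1 y A)) ->
  (forall A, measurable A -> measurable_fun setT (fun y => t2 y A)) ->
  (exists c, forall x A, `|t1 x A| <= c) -> (exists c, forall x A, `|t2 x A| <= c) ->
  (forall x A, measurable A -> t1 x A <= t2 x A) -> op_le t1 t2.
Proof.
move=> m1 m2 [c1 b1] [c2 b2] h mu fmu A mA; rewrite /op_apply.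
have i1 : mu.-integrable setT (EFin \o (fun y => t1 y A)).
  apply: measurable_bounded_integrable => //; first exact: m1.
  exists c1; split; first exact: num_real.
  by move=> M hM x _ /=; rewrite (le_trans (b1 x A)) // ltW.
have i2 : mu.-integrable setT (EFin \o (fun y => t2 y A)).
  apply: measurable_bounded_integrable => //; first exact: m2.
  exists c2; split; first exact: num_real.
  by move=> M hM x _ /=; rewrite (le_trans (b2 x A)) // ltW.
apply: fine_le; try exact: integrable_fin_num.
apply: le_integral => // x _; rewrite lee_fin; exact: h.
Qed.

Lemma Om0_pp n : Om0 R (n.+1%:R)^-1. Proof. by right; exists n; left. Qed.
Lemma Om0_mm n : Om0 R (- (n.+1%:R)^-1). Proof. by right; exists n; right. Qed.
Definition pp n : O := mkO (Om0_pp n).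
Definition mm n : O := mkO (Om0_mm n).

Lemma seq_cvg (u : nat -> O) y : (@sv R \o u) @ \oo --> sv y -> u @ \oo --> y.
Proof.
move=> h U; rewrite nbhsE => -[V [[W oW WV] Vy] VU].
have hW : nbhs (sv y) W.
  apply: open_nbhs_nbhs; split => //; rewrite -WV in Vy; exact: Vy.
case: (h W hW) => N _ HN; exists N => // n Nn; apply: VU; rewrite -WV; exact: HN.
Qed.

Lemma pp_cvg : pp @ \oo --> om0 R.
Proof. by apply: seq_cvg; exact: cvg_harmonic. Qed.

Lemma mm_cvg : mm @ \oo --> om0 R.
Proof.
apply: seq_cvg; rewrite [X in _ --> X](_ : _ = - 0); last by rewrite oppr0.
exact: cvgN cvg_harmonic.
Qed.

Lemma disc (g : O -> R) c : continuous g -> (forall n, g (pp n) = c) ->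
  (forall n, g (mm n) = 0) -> c = 0.
Proof.
move=> cg hp hm.
have h1 : (g \o pp) @ \oo --> g (om0 R) := continuous_cvg _ (cg _) pp_cvg.
have h2 : (g \o mm) @ \oo --> g (om0 R) := continuous_cvg _ (cg _) mm_cvg.
have e1 : g \o pp = cst c by apply/funext => n /=.
have e2 : g \o mm = cst 0 by apply/funext => n /=.
rewrite e1 in h1; rewrite e2 in h2.
have {}h1 := h1 eventually_filter; have {}h2 := h2 eventually_filter.
have E1 : c = g (om0 R) by apply: (cvg_unique (@Rhausdorff R) _ h1); exact: cvg_cst.
have E2 : 0 = g (om0 R) by apply: (cvg_unique (@Rhausdorff R) _ h2); exact: cvg_cst.
by rewrite E1 E2.
Qed.

End S5.


Section S6.
Variable R : realType.
Local Notation T := (OmB R).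
Local Notation O := (Om R).

Lemma pp_gt0 n : 0 < sv (pp R n). Proof. by rewrite /pp svK invr_gt0. Qed.

Lemma nabs_pp n : nabsO (pp R n) = mm R n.
Proof. by apply: sv_inj; rewrite /nabsO /mm !svK gtr0_norm // invr_gt0. Qed.
Lemma nabs_mm n : nabsO (mm R n) = mm R n.
Proof. by apply: sv_inj; rewrite /nabsO /mm !svK normrN gtr0_norm // invr_gt0. Qed.
Lemma pabs_mm n : pabsO (mm R n) = pp R n.
Proof. by apply: sv_inj; rewrite /pabsO /mm /pp !svK normrN gtr0_norm // invr_gt0. Qed.
Lemma neg_mm n : onegO (mm R n) = pp R n.
Proof. by apply: sv_inj; rewrite /onegO /mm /pp !svK opprK. Qed.
Lemma pp_mm n : pp R n <> mm R n.
Proof.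
move/(congr1 (@sv R)); rewrite /mm /pp !svK => h.
have hp : 0 < (n.+1%:R)^-1 :> R by rewrite invr_gt0.
have := hp; rewrite {1}h oppr_gt0 => hn.
by move: (lt_trans hn hp); rewrite ltxx.
Qed.

Lemma pabs_ge0 (x : O) : 0 <= sv x -> pabsO x = x.
Proof. by move=> h; apply: sv_inj; rewrite /pabsO svK ger0_norm. Qed.
Lemma nabs_ge0 (x : O) : 0 <= sv x -> nabsO x = onegO x.
Proof. by move=> h; apply: sv_inj; rewrite /nabsO /onegO !svK ger0_norm. Qed.
Lemma nabs_lt0 (x : O) : sv x < 0 -> nabsO x = x.
Proof. by move=> h; apply: sv_inj; rewrite /nabsO svK ltr0_norm // opprK. Qed.

Lemma ind_nb (B : set T) p : `|\1_B p : R| <= 1.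
Proof. by rewrite indicE; case: (_ \in _); rewrite ?normr0 ?normr1. Qed.

Lemma kern_bd phi psi (e : R) x A : (e = 1 \/ e = -1) -> `|kern phi psi e x A| <= 2.
Proof.
move=> he; rewrite /kern (le_trans (ler_normD _ _)) // normrM.
have -> : `|e| = 1 by case: he => ->; rewrite ?normrN normr1.
by rewrite mul1r -[2]/(1 + 1); apply: lerD; exact: ind_nb.
Qed.

Definition k0 : T -> set T -> R := kern id (@nabsO R) (-1).
Definition r1 : T -> set T -> R := kern id (@nabsO R) 1.
Definition r2 : T -> set T -> R := kern (@pabsO R) (@onegO R) 1.

Lemma k0_meas A : measurable A -> measurable_fun setT (fun y => k0 y A).
Proof. by apply: kern_meas; [exact: id_cont | exact: nabsO_cont]. Qed.
Lemma nk0_meas A : measurable A -> measurable_fun setT (fun y => opp_kernel k0 y A).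
Proof. by move=> mA; apply: measurable_funN; exact: k0_meas. Qed.
Lemma r1_meas A : measurable A -> measurable_fun setT (fun y => r1 y A).
Proof. by apply: kern_meas; [exact: id_cont | exact: nabsO_cont]. Qed.
Lemma r2_meas A : measurable A -> measurable_fun setT (fun y => r2 y A).
Proof. by apply: kern_meas; [exact: pabsO_cont | exact: onegO_cont]. Qed.

Lemma k0_bd : exists c, forall x A, `|k0 x A| <= c.
Proof. by exists 2 => x A; apply: kern_bd; right. Qed.
Lemma nk0_bd : exists c, forall x A, `|opp_kernel k0 x A| <= c.
Proof. by exists 2 => x A; rewrite /opp_kernel normrN; apply: kern_bd; right. Qed.
Lemma r1_bd : exists c, forall x A, `|r1 x A| <= c.
Proof. by exists 2 => x A; apply: kern_bd; left. Qed.
Lemma r2_bd : exists c, forall x A, `|r2 x A| <= c.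
Proof. by exists 2 => x A; apply: kern_bd; left. Qed.

Lemma k0_r1 : op_le k0 r1.
Proof.
apply: ople_pt; [exact: k0_meas|exact: r1_meas|exact: k0_bd|exact: r1_bd|].
move=> x A _; rewrite /k0 /r1 /kern mulN1r mul1r lerD2l.
by rewrite (le_trans _ (ind_ge0 _ _)) // oppr_le0 ind_ge0.
Qed.

Lemma nk0_r1 : op_le (opp_kernel k0) r1.
Proof.
apply: ople_pt; [exact: nk0_meas|exact: r1_meas|exact: nk0_bd|exact: r1_bd|].
move=> x A _; rewrite /opp_kernel /k0 /r1 /kern mulN1r mul1r opprB addrC lerD2r.
by rewrite (le_trans _ (ind_ge0 _ _)) // oppr_le0 ind_ge0.
Qed.

Lemma k0_r2 : op_le k0 r2.
Proof.
apply: ople_pt; [exact: k0_meas|exact: r2_meas|exact: k0_bd|exact: r2_bd|].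
move=> x A _; rewrite /k0 /r2 /kern mulN1r mul1r /=.
have [h|h] := leP 0 (sv x).
  rewrite nabs_ge0 // pabs_ge0 // lerD2l.
  by rewrite (le_trans _ (ind_ge0 _ _)) // oppr_le0 ind_ge0.
by rewrite nabs_lt0 // subrr addr_ge0 // ind_ge0.
Qed.

Lemma nk0_r2 : op_le (opp_kernel k0) r2.
Proof.
apply: ople_pt; [exact: nk0_meas|exact: r2_meas|exact: nk0_bd|exact: r2_bd|].
move=> x A _; rewrite /opp_kernel /k0 /r2 /kern mulN1r mul1r opprB /=.
have [h|h] := leP 0 (sv x).
  rewrite nabs_ge0 // pabs_ge0 // addrC lerD2r.
  by rewrite (le_trans _ (ind_ge0 _ _)) // oppr_le0 ind_ge0.
by rewrite nabs_lt0 // subrr addr_ge0 // ind_ge0.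
Qed.

End S6.


Section S7.
Variable R : realType.
Local Notation T := (OmB R).
Local Notation O := (Om R).

Lemma Cb1 : Cb (fun _ : O => 1 : R).
Proof. by split; [exact: cst_continuous | exists 1 => x; rewrite normr1]. Qed.

Lemma two_neq0 : (1 + 1 : R) != 0.
Proof. by rewrite paddr_eq0 ?oner_eq0 // ler01. Qed.

Lemma ind_D1 (B : set T) p q : p <> q -> \1_(B `\ q) p = \1_B p :> R.
Proof.
move=> pq; have [Bp|Bp] := pselect (B p).
  by rewrite !ind_in //; split => //= qp; apply: pq.
by rewrite !ind_out // => -[].
Qed.

Lemma abs_not : ~ adj_preserves_Cb (abs_kernel (@k0 R)).
Proof.
move=> hC; have [cg _] := hC _ Cb1.
suff : (1 + 1 : R) = 0 by move/eqP; rewrite (negbTE two_neq0).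
apply: (disc cg) => n.
- rewrite /adjoint; set a := pp R n.
  have ne : (a : T) <> nabsO a by rewrite nabs_pp; exact: pp_mm.
  have h : forall B, measurable B -> @k0 R a B = \1_B (a:T) - \1_B (nabsO a : T).
    by move=> B _; rewrite /k0 /kern mulN1r.
  apply: (@S1 _ _ (a : T) (nabsO a : T)); last exact: measurable_cst.
  by move=> B mB; rewrite /abs_kernel /tvar (JPm ne h) (JPmn ne h).
- rewrite /adjoint; set c := mm R n.
  have h : forall B, measurable B -> @k0 R c B = 0.
    by move=> B _; rewrite /k0 /kern /= nabs_mm mulN1r subrr.
  apply: S0 => B mB; rewrite /abs_kernel /tvar.
  by have [-> ->] := JP0 h; rewrite adde0.
Qed.

Lemma no_modulus : ~ (exists s : T -> set T -> R, is_modulus_in_sigma_cont s (@k0 R)).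
Proof.
move=> [s [scs [hks [hnks hmin]]]].
have sc1 : sigma_cont (@r1 R) by apply: sc_kern; [exact: id_cont|exact: nabsO_cont|left].
have sc2 : sigma_cont (@r2 R) by apply: sc_kern; [exact: pabsO_cont|exact: onegO_cont|left].
have hr1 : op_le s (@r1 R) := hmin _ sc1 (@k0_r1 R) (@nk0_r1 R).
have hr2 : op_le s (@r2 R) := hmin _ sc2 (@k0_r2 R) (@nk0_r2 R).
case: scs => -[[fs ms] _] adjs.
have L1 x A : measurable A -> @k0 R x A <= s x A.
  by move=> mA; apply: (le_dirac x hks mA); [exact: k0_meas | exact: ms].
have L2 x A : measurable A -> - @k0 R x A <= s x A.
  by move=> mA; apply: (@le_dirac R (opp_kernel (@k0 R)) s x A hnks mA);
    [exact: nk0_meas | exact: ms].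
have U1 x A : measurable A -> s x A <= @r1 R x A.
  by move=> mA; apply: (le_dirac x hr1 mA); [exact: ms | exact: r1_meas].
have U2 x A : measurable A -> s x A <= @r2 R x A.
  by move=> mA; apply: (le_dirac x hr2 mA); [exact: ms | exact: r2_meas].
have sa n : forall B, measurable B ->
    s (pp R n) B = \1_B (pp R n : T) + \1_B (mm R n : T).
  move=> B mB; set a := pp R n; set b := mm R n.
  have ba : (b : T) <> a by move=> /esym; exact: pp_mm.
  apply/le_anti/andP; split.
    by have := U1 a B mB; rewrite /r1 /kern mul1r /= nabs_pp.
  have mBa : measurable (B `\ (a : T)) by apply: measurableD => //; exact: mset1.
  rewrite (fs_dec (a:T) (fs a) mB) (fs_dec (b:T) (fs a) mBa) ind_D1 //.
  have hsa : 1 <= s a [set (a : T)].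
    have := L1 a [set (a : T)] (mset1 _).
    by rewrite /k0 /kern mulN1r /= nabs_pp ind_in // ind_out // subr0.
  have hsb : 1 <= s a [set (b : T)].
    have := L2 a [set (b : T)] (mset1 _).
    rewrite /k0 /kern mulN1r /= nabs_pp ind_out // ?ind_in // ?sub0r ?opprK //.
    by move=> ab; apply: ba; rewrite ab.
  have hs0 : 0 <= s a (B `\ (a:T) `\ (b:T)).
    have := L1 a (B `\ (a:T) `\ (b:T)) (measurableD mBa (mset1 _)).
    rewrite /k0 /kern mulN1r /= nabs_pp.
    rewrite (ind_out (A := B `\ (a:T) `\ (b:T)) (p := a)); last by move=> [[_ /= h] _]; apply: h.
    by rewrite (ind_out (A := B `\ (a:T) `\ (b:T)) (p := mm R n)) ?subr0 // => -[_ /= h]; apply: h.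
  have e1 : \1_B (a:T) <= \1_B (a:T) * s a [set (a:T)].
    by rewrite -{1}[\1_B (a:T)]mulr1 ler_wpM2l // ind_ge0.
  have e2 : \1_B (b:T) <= \1_B (b:T) * s a [set (b:T)].
    by rewrite -{1}[\1_B (b:T)]mulr1 ler_wpM2l // ind_ge0.
  lra.
have sm n : forall B, measurable B -> s (mm R n) B = 0.
  move=> B mB; set c := mm R n.
  have dc : (pp R n : T) <> c by exact: pp_mm.
  apply/le_anti/andP; split; last first.
    by have := L1 c B mB; rewrite /k0 /kern /= nabs_mm mulN1r subrr.
  have mBc : measurable (B `\ (c : T)) by apply: measurableD => //; exact: mset1.
  rewrite (fs_dec (c:T) (fs c) mB).
  have u1 : s c (B `\ (c:T)) <= 0.
    have := U1 c _ mBc; rewrite /r1 /kern /= nabs_mm mul1r ind_out ?addr0 //.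
    by move=> [_ /= h]; apply: h.
  have u2 : s c [set (c:T)] <= 0.
    have := U2 c _ (mset1 (c:T)); rewrite /r2 /kern /= pabs_mm neg_mm mul1r.
    by rewrite ind_out ?addr0.
  have u3 : \1_B (c:T) * s c [set (c:T)] <= 0 by rewrite mulr_ge0_le0 // ind_ge0.
  lra.
have [cg _] := adjs _ Cb1.
suff : (1 + 1 : R) = 0 by move/eqP; rewrite (negbTE two_neq0).
apply: (disc cg) => n; rewrite /adjoint.
- by apply: (S1 (sa n)); exact: measurable_cst.
- by rewrite S0 //; exact: sm.
Qed.

End S7.

Theorem mainTheorem3 (R : realType) :
  exists k : OmB R -> set (OmB R) -> R,
    sigma_cont k /\
    ~ adj_preserves_Cb (abs_kernel k) /\
    ~ (exists s : OmB R -> set (OmB R) -> R, is_modulus_in_sigma_cont s k).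
Proof.
exists (@k0 R); split.
  by apply: sc_kern; [exact: id_cont|exact: nabsO_cont|right].
split; [exact: abs_not | exact: no_modulus].
Qed.
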